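(* Let $N$ and $n$ be positive integers. Let $G$ be the complete graph on a vertex set $A$ and let $(A_i)_{i=1}^{n}$ be a partition of $A$ into pairwise disjoint sets with $|A_i|\ge N$ for every $i\in[n]$. Then for any $2$-colouring (red/blue) of the edges of $G$, either there is a red path $u_1u_2\cdots u_n$ with $u_i\in A_i$ for each $i\in[n]$, or for some $i\in[n-1]$ there exist $B_i\subseteq A_i$ and $B_{i+1}\subseteq A_{i+1}$ with $\min\{|B_i|,|B_{i+1}|\}\ge N/2$ such that all edges between $B_i$ and $B_{i+1}$ are blue. *)

(* Defs.v *)
From mathcomp Require Import all_boot.
Set Implicit Arguments. Unset Strict Implicit. Unset Printing Implicit Defensive.

(* Main.v *)
Require Import Defs.
From mathcomp Require Import all_boot.
From mathcomp Require Import zify.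

Section S.
Variables (T : finType) (A : nat -> {set T}) (red : T -> T -> bool).

Fixpoint R (i : nat) : {set T} :=
  match i with
  | 0 => A 0
  | k.+1 => [set y in A k.+1 | [exists x in R k, red x y]]
  end.

Lemma R_path i y : y \in R i -> exists u : nat -> T,
  [/\ forall j, j <= i -> u j \in A j,
      forall j, j < i -> red (u j) (u j.+1) & u i = y].
Proof.
elim: i y => [|i IH] y /=.
  move=> Hy; exists (fun _ => y); split => // j; rewrite leqn0 => /eqP -> //.
rewrite inE => /andP [HyA /existsP [x /andP [HxR Hxy]]].
have [u [Hu1 Hu2 Hu3]] := IH x HxR.
exists (fun j => if j == i.+1 then y else u j); split.
- move=> j Hj; case: eqP => [->|/eqP Hne] //.
  apply: Hu1; rewrite -ltnS ltn_neqAle Hne Hj //.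
- move=> j Hj; have -> : (j == i.+1) = false by apply/negbTE; rewrite neq_ltn Hj.
  case: (eqVneq j i) => [->|Hne]; first by rewrite eqxx Hu3.
  have Hji : j < i by rewrite ltn_neqAle Hne -ltnS.
  by rewrite eqSS (negbTE Hne); apply: Hu2.
- by rewrite eqxx.
Qed.

Lemma R_sub i : R i \subset A i.
Proof. case: i => [|i] /=; first exact: subxx. by apply/subsetP => y; rewrite inE => /andP []. Qed.

End S.
Arguments R {T} A red i.
Arguments R_sub {T} A red i.

Theorem lemmal (N n : nat) (T : finType) (A : nat -> {set T})
    (red : T -> T -> bool)
    (hN : 0 < N) (hn : 0 < n)
    (hcover : forall x : T, exists2 i, i < n & x \in A i)
    (hdisj : forall i j, i < n -> j < n -> i != j -> [disjoint A i & A j])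
    (hsize : forall i, i < n -> N <= #|A i|)
    (hsym : forall x y, red x y = red y x) :
  (exists u : nat -> T,
      (forall i, i < n -> u i \in A i) /\
      (forall i, i.+1 < n -> red (u i) (u i.+1)))
  \/
  (exists i, i.+1 < n /\
     exists (B1 B2 : {set T}),
       [/\ B1 \subset A i, B2 \subset A i.+1,
           N <= 2 * #|B1|, N <= 2 * #|B2| &
           forall x y, x \in B1 -> y \in B2 -> ~~ red x y]).
Proof.
set Blue := (X in _ \/ X).
have key : forall i, i < n -> N <= 2 * #|R A red i| \/ Blue.
  elim=> [|i IH] Hi.
    left; rewrite /=; apply: leq_trans (hsize 0 Hi) _; rewrite leq_pmull //.
  have [Hb|] := IH (ltnW Hi); last by right.
  case: (leqP N (2 * #|R A red i.+1|)) => Hs; first by left.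
  right; exists i; split => //.
  exists (R A red i), (A i.+1 :\: R A red i.+1); split => //.
  - exact: R_sub.
  - exact: subsetDl.
  - have := hsize _ Hi.
    have := cardsID (R A red i.+1) (A i.+1).
    rewrite (setIidPr (R_sub A red i.+1)) => <-.
    move=> H; move: Hs H; set a := #|_|; set b := #|_|.
    move=> Hs H; lia.
  - move=> x y Hx; rewrite inE => /andP [HyR HyA]; apply/negP => Hr.
    move/negP: HyR; apply; rewrite /= inE HyA /=; apply/existsP; exists x.
    by rewrite Hx Hr.
have Hn1 : n.-1 < n by rewrite prednK.
have [H|] := key _ Hn1; last by right.
have : 0 < #|R A red n.-1|.
  rewrite lt0n; apply/negP => /eqP H0; move: H; rewrite H0 muln0 leqn0.
  by move/eqP=> HN; rewrite HN in hN.
case/card_gt0P => y Hy.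
have [u [Hu1 Hu2 _]] := @R_path T A red _ _ Hy.
left; exists u; split.
- by move=> i Hi; apply: Hu1; rewrite -ltnS prednK.
- by move=> i Hi; apply: Hu2; rewrite -ltnS prednK.
Qed.
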